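(* Let $f,g,f_n,g_n\in\mathcal D$ ($n\in\mathbb N$) with $f_n\to f$ and $g_n\to g$ uniformly on $[0,1]$. Then: (a) $\chi(f,g)\le\sup_{n\in\mathbb N}\chi(f_n,g_n)$; (b) if $g_n\lhd f_n$ for all $n\in\mathbb N$, then either $f=g$ or $g\lhd f$.
   Context: $\mathcal D$: the set of continuous strictly decreasing $f\colon[0,1]\to[0,1]$ with $f(0)=1$, $f(1)=0$. For $f\in\mathcal D$ and $a>0$, $f_{[a]}\colon[0,\frac1a]\to[0,1]$, $x\mapsto f(ax)$; for $b>0$, $f_{[a]}-bg$ is considered on $[0,\min\{1,\frac1a\}]$. Sign switches: for a continuous $\Delta\colon[c_0,d_0]\to\mathbb R$, a closed subinterval $[c,d]$ with $c_0<c\le d<d_0$ and $\Delta([c,d])=\{0\}$ is a sign switch if there is $\delta\in(0,\min\{c-c_0,d_0-d\}]$ with $\Delta(c-x)\Delta(d+x)<0$ for all $x\in(0,\delta]$; $\chi\Delta$ is the number of sign switches. Crossing number: $\chi(f,g):=\sup\{\chi(f_{[a]}-bg): a,b>0\}\in\mathbb N_0\cup\{\infty\}$. Domination: $g\lhd f$ means $\chi(f,g)=2$ and $g\le f$ pointwise. *)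

(* Defs.v *)
From Stdlib Require Import Reals Lra List ClassicalEpsilon.
Open Scope R_scope.

Inductive enat : Type := Fin (n : nat) | Inf.

Definition enat_le (x y : enat) : Prop :=
  match x, y with
  | _, Inf => True
  | Inf, Fin _ => False
  | Fin m, Fin n => (m <= n)%nat
  end.

(* Given P k meaning "the quantity is >= k" (P 0 true, P downward closed),
   the value of the quantity in N_0 ∪ {∞}: ∞ if P holds for every k,
   otherwise the (unique) k with P k and ~ P (k+1). *)
Definition enat_of_ge (P : nat -> Prop) : enat :=
  match excluded_middle_informative (forall k, P k) with
  | left _ => Inf
  | right _ => Fin (epsilon (inhabits 0%nat) (fun k => P k /\ ~ P (S k)))
  end.

Definition in_D (f : R -> R) : Prop :=
  (forall x, 0 <= x <= 1 -> forall eps, 0 < eps -> exists delta, 0 < delta /\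
     forall y, 0 <= y <= 1 -> Rabs (y - x) < delta -> Rabs (f y - f x) < eps) /\
  (forall x y, 0 <= x <= 1 -> 0 <= y <= 1 -> x < y -> f y < f x) /\
  (forall x, 0 <= x <= 1 -> 0 <= f x <= 1) /\
  f 0 = 1 /\ f 1 = 0.

Definition sign_switch (Delta : R -> R) (c0 d0 c d : R) : Prop :=
  c0 < c /\ c <= d /\ d < d0 /\
  (forall x, c <= x <= d -> Delta x = 0) /\
  exists delta, 0 < delta /\ delta <= Rmin (c - c0) (d0 - d) /\
    forall x, 0 < x <= delta -> Delta (c - x) * Delta (d + x) < 0.

Definition switches_ge (Delta : R -> R) (c0 d0 : R) (k : nat) : Prop :=
  exists l : list (R * R), length l = k /\ NoDup l /\
    Forall (fun p => sign_switch Delta c0 d0 (fst p) (snd p)) l.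

Definition chi (Delta : R -> R) (c0 d0 : R) : enat :=
  enat_of_ge (switches_ge Delta c0 d0).

Definition scaled_diff (f g : R -> R) (a b : R) : R -> R :=
  fun x => f (a * x) - b * g x.

Definition crossing_number (f g : R -> R) : enat :=
  enat_of_ge (fun k => exists a b, 0 < a /\ 0 < b /\
    enat_le (Fin k) (chi (scaled_diff f g a b) 0 (Rmin 1 (/ a)))).

Definition enat_sup_seq (u : nat -> enat) : enat :=
  enat_of_ge (fun k => exists n, enat_le (Fin k) (u n)).

Definition dominated (g f : R -> R) : Prop :=
  crossing_number f g = Fin 2 /\ forall x, 0 <= x <= 1 -> g x <= f x.

Definition unif_conv (fs : nat -> R -> R) (f : R -> R) : Prop :=
  forall eps, 0 < eps -> exists N, forall n, (N <= n)%nat ->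
    forall x, 0 <= x <= 1 -> Rabs (fs n x - f x) < eps.

(* Main.v *)
Require Import Defs.
From Stdlib Require Import Reals.
From Stdlib Require Import Lra Lia List ClassicalEpsilon Classical Arith Compare_dec.
Open Scope R_scope.

Definition DC (P : nat -> Prop) := forall k, P (S k) -> P k.

Lemma DC_le (P : nat -> Prop) : DC P -> forall j k, (j <= k)%nat -> P k -> P j.
Proof. intros H j k Hjk. induction Hjk; auto. Qed.

Lemma boundary (P : nat -> Prop) : P 0%nat -> forall k, ~ P k -> exists j, P j /\ ~ P (S j).
Proof.
  intros H0 k. induction k; intros Hk. contradiction.
  destruct (classic (P k)) as [Hp|Hp]. exists k; auto. auto.
Qed.

Lemma eog_spec (P : nat -> Prop) : DC P -> P 0%nat ->
  ((forall k, P k) /\ enat_of_ge P = Inf) \/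
  (exists k, enat_of_ge P = Fin k /\ P k /\ ~ P (S k)).
Proof.
  intros HD H0. unfold enat_of_ge.
  destruct (excluded_middle_informative (forall k, P k)) as [Ha|Ha]. left; auto.
  right. eexists; split; [reflexivity|]. apply epsilon_spec.
  apply not_all_ex_not in Ha. destruct Ha as [k Hk]. eapply boundary; eauto.
Qed.

Lemma le_eog (P : nat -> Prop) k : DC P -> P 0%nat ->
  (enat_le (Fin k) (enat_of_ge P) <-> P k).
Proof.
  intros HD H0. destruct (eog_spec P HD H0) as [[Ha E]|[j [E [Pj Nj]]]]; rewrite E; simpl.
  - split; auto.
  - split. intros. eapply DC_le; eauto.
    intros Pk. destruct (le_lt_dec k j); auto. exfalso. apply Nj. eapply DC_le; eauto.
Qed.

Lemma eog_mono (P Q : nat -> Prop) : DC P -> DC Q -> P 0%nat -> Q 0%nat ->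
  (forall k, P k -> Q k) -> enat_le (enat_of_ge P) (enat_of_ge Q).
Proof.
  intros DP DQ P0 Q0 H.
  destruct (eog_spec Q DQ Q0) as [[Ha E]|[j [E [Qj Nj]]]]; rewrite E.
  - destruct (enat_of_ge P); simpl; auto.
  - destruct (eog_spec P DP P0) as [[Ha' E']|[i [E' [Pi Ni]]]]; rewrite E'; simpl.
    + apply Nj, H, Ha'.
    + destruct (le_lt_dec i j); auto. exfalso. apply Nj. eapply DC_le; eauto.
Qed.

Definition cont_on (phi : R -> R) (u v : R) := forall x, u <= x <= v -> forall eps, 0 < eps ->
  exists delta, 0 < delta /\ forall y, u <= y <= v -> Rabs (y - x) < delta -> Rabs (phi y - phi x) < eps.

Definition clamp u v x := Rmax u (Rmin v x).

Lemma clamp_in u v x : u <= v -> u <= clamp u v x <= v.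
Proof. intros. unfold clamp, Rmax, Rmin. repeat destruct Rle_dec; lra. Qed.

Lemma clamp_id u v x : u <= x <= v -> clamp u v x = x.
Proof. intros. unfold clamp, Rmax, Rmin. repeat destruct Rle_dec; lra. Qed.

Lemma clamp_lip u v x y : u <= v -> Rabs (clamp u v y - clamp u v x) <= Rabs (y - x).
Proof. intros. unfold clamp, Rmax, Rmin. repeat destruct Rle_dec; unfold Rabs; repeat destruct Rcase_abs; lra. Qed.

Lemma cont_clamp phi u v : u <= v -> cont_on phi u v -> continuity (fun x => phi (clamp u v x)).
Proof.
  intros Huv Hc x. unfold continuity_pt, continue_in, limit1_in, limit_in. simpl. unfold R_dist.
  intros eps Heps. destruct (Hc (clamp u v x) (clamp_in u v x Huv) eps Heps) as [d [Hd Hy]].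
  exists d. split; auto. intros y [_ Hy']. apply Hy. apply clamp_in; auto.
  eapply Rle_lt_trans. apply clamp_lip; auto. auto.
Qed.

Lemma IVT_gen phi u v x1 x2 : cont_on phi u v -> u <= x1 <= v -> u <= x2 <= v ->
  phi x1 * phi x2 <= 0 -> exists z, Rmin x1 x2 <= z <= Rmax x1 x2 /\ phi z = 0.
Proof.
  intros Hc H1 H2 Hp.
  assert (Huv : u <= v) by lra.
  pose proof (cont_clamp phi u v Huv Hc) as Hcc.
  destruct (Rle_dec x1 x2).
  - destruct (IVT_cor _ x1 x2 Hcc r) as [z [Hz Ez]].
    + rewrite !clamp_id; auto.
    + assert (u <= z <= v) by lra. rewrite clamp_id in Ez; auto. exists z.
      unfold Rmin, Rmax; repeat destruct Rle_dec; split; try lra.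
  - destruct (IVT_cor _ x2 x1 Hcc) as [z [Hz Ez]]. lra.
    + rewrite !clamp_id; auto. lra.
    + assert (u <= z <= v) by lra. rewrite clamp_id in Ez; auto. exists z.
      unfold Rmin, Rmax; repeat destruct Rle_dec; split; try lra.
Qed.

Lemma cont_on_sub phi u v u' v' : cont_on phi u v -> u <= u' -> v' <= v -> cont_on phi u' v'.
Proof.
  intros Hc H1 H2 x Hx eps He. destruct (Hc x ltac:(lra) eps He) as [d [Hd Hy]].
  exists d; split; auto. intros y Hy' Hxy. apply Hy; auto; lra.
Qed.

Lemma cont_on_lin phi u v c : cont_on phi u v -> cont_on (fun x => c * phi x) u v.
Proof.
  intros Hc x Hx eps He.
  destruct (Hc x Hx (eps / (Rabs c + 1))) as [d [Hd Hy]].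
  { apply Rdiv_lt_0_compat; auto. pose proof (Rabs_pos c); lra. }
  exists d; split; auto. intros y Hy' Hxy.
  replace (c * phi y - c * phi x) with (c * (phi y - phi x)) by ring.
  rewrite Rabs_mult. specialize (Hy y Hy' Hxy).
  pose proof (Rabs_pos c). pose proof (Rabs_pos (phi y - phi x)).
  apply Rle_lt_trans with ((Rabs c + 1) * Rabs (phi y - phi x)). nra.
  apply Rmult_lt_reg_r with (/ (Rabs c + 1)). apply Rinv_0_lt_compat; lra.
  replace ((Rabs c + 1) * Rabs (phi y - phi x) * / (Rabs c + 1)) with (Rabs (phi y - phi x)) by (field; lra).
  exact Hy.
Qed.

Lemma cont_on_minus phi psi u v : cont_on phi u v -> cont_on psi u v -> cont_on (fun x => phi x - psi x) u v.
Proof.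
  intros H1 H2 x Hx eps He.
  destruct (H1 x Hx (eps/2)) as [d1 [Hd1 Hy1]]; [lra|].
  destruct (H2 x Hx (eps/2)) as [d2 [Hd2 Hy2]]; [lra|].
  exists (Rmin d1 d2). split. apply Rmin_pos; auto.
  intros y Hy Hxy. specialize (Hy1 y Hy). specialize (Hy2 y Hy).
  assert (Rabs (y - x) < d1) by (eapply Rlt_le_trans; [exact Hxy| apply Rmin_l]).
  assert (Rabs (y - x) < d2) by (eapply Rlt_le_trans; [exact Hxy| apply Rmin_r]).
  replace (phi y - psi y - (phi x - psi x)) with ((phi y - phi x) + - (psi y - psi x)) by ring.
  eapply Rle_lt_trans. apply Rabs_triang. rewrite Rabs_Ropp.
  specialize (Hy1 H). specialize (Hy2 H0). lra.
Qed.

Lemma cont_on_scale phi a v : 0 < a -> a * v <= 1 -> cont_on phi 0 1 -> cont_on (fun x => phi (a * x)) 0 v.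
Proof.
  intros Ha Hv Hc x Hx eps He.
  assert (0 <= a * x <= 1) by nra.
  destruct (Hc (a * x) H eps He) as [d [Hd Hy]].
  exists (d / a). split. apply Rdiv_lt_0_compat; auto.
  intros y Hy' Hxy. apply Hy. nra.
  replace (a * y - a * x) with (a * (y - x)) by ring. rewrite Rabs_mult, Rabs_pos_eq by lra.
  apply Rmult_lt_reg_r with (/ a). apply Rinv_0_lt_compat; auto.
  replace (a * Rabs (y - x) * / a) with (Rabs (y - x)) by (field; lra). exact Hxy.
Qed.

Lemma common_pos {A} (l : list A) (Q : A -> R -> Prop) :
  (forall a, In a l -> exists r, 0 < r /\ forall r', 0 < r' <= r -> Q a r') ->
  exists r, 0 < r /\ forall a, In a l -> forall r', 0 < r' <= r -> Q a r'.
Proof.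
  induction l as [|a l IH]; intros H.
  - exists 1; split; [lra|]. intros a [].
  - destruct (H a (or_introl eq_refl)) as [r1 [Hr1 Q1]].
    destruct IH as [r2 [Hr2 Q2]]. { intros b Hb. apply H. right; auto. }
    exists (Rmin r1 r2). split. apply Rmin_pos; auto.
    intros b [<-|Hb] r' Hr'; pose proof (Rmin_l r1 r2); pose proof (Rmin_r r1 r2).
    + apply Q1; lra.
    + apply Q2; auto; lra.
Qed.

Lemma isolate (l : list R) z : exists d, 0 < d /\ forall w, In w l -> w <> z -> d <= Rabs (w - z).
Proof.
  destruct (common_pos l (fun w r => w <> z -> r <= Rabs (w - z))) as [d [Hd H]].
  - intros w _. destruct (Req_dec w z) as [E|E].
    + exists 1. split; [lra|]. intros; contradiction.
    + exists (Rabs (w - z)). split. apply Rabs_pos_lt. lra. intros r' Hr' _. lra.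
  - exists d. split; auto. intros w Hw Hne. apply (H w Hw d); auto. lra.
Qed.

Lemma sign_same phi u v a b : cont_on phi u v -> u <= a <= v -> u <= b <= v ->
  (forall z, Rmin a b <= z <= Rmax a b -> phi z <> 0) -> phi a * phi b > 0.
Proof.
  intros Hc Ha Hb Hz.
  destruct (Rlt_dec 0 (phi a * phi b)) as [H|H]. lra.
  destruct (IVT_gen phi u v a b Hc Ha Hb) as [z [Hz0 E]]. lra.
  exfalso. eapply Hz; eauto.
Qed.

Lemma prod_neg_sign a b a' b' : a * b < 0 -> a' * a > 0 -> b' * b > 0 -> a' * b' < 0.
Proof.
  intros H1 H2 H3.
  assert (H4 : (a' * b') * (a * b) > 0).
  { replace ((a' * b') * (a * b)) with ((a' * a) * (b' * b)) by ring. nra. }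
  destruct (Rlt_dec (a' * b') 0); auto. nra.
Qed.

Lemma clean_cross : forall N (l : list R) phi p q, (length l <= N)%nat -> p < q ->
  cont_on phi p q -> phi p * phi q < 0 ->
  (forall x, p <= x <= q -> phi x = 0 -> In x l) ->
  exists z, p < z < q /\ phi z = 0 /\ exists d, 0 < d /\ d <= z - p /\ d <= q - z /\
    forall x, 0 < x <= d -> phi (z - x) * phi (z + x) < 0.
Proof.
  induction N; intros l phi p q Hl Hpq Hc Hs Hz.
  - destruct l; [|simpl in Hl; lia].
    destruct (IVT_gen phi p q p q Hc ltac:(lra) ltac:(lra) ltac:(lra)) as [z [Hz1 Ez]].
    exfalso. apply (Hz z). unfold Rmin, Rmax in Hz1; destruct Rle_dec; lra. auto.
  - destruct (IVT_gen phi p q p q Hc ltac:(lra) ltac:(lra) ltac:(lra)) as [z [Hz1 Ez]].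
    unfold Rmin, Rmax in Hz1; destruct Rle_dec; [|lra].
    assert (pz : p < z). { destruct (Req_dec p z); [subst; nra|lra]. }
    assert (zq : z < q). { destruct (Req_dec z q); [subst; nra|lra]. }
    assert (Hzl : In z l) by (apply Hz; auto; lra).
    destruct (isolate l z) as [d0 [Hd0 Hiso]].
    set (d1 := Rmin (d0/2) (Rmin ((z - p)/2) ((q - z)/2))).
    assert (Hd1 : 0 < d1). { unfold d1. repeat apply Rmin_pos; lra. }
    assert (d1a : d1 <= d0/2) by apply Rmin_l.
    assert (d1b : d1 <= (z-p)/2) by (eapply Rle_trans; [apply Rmin_r|apply Rmin_l]).
    assert (d1c : d1 <= (q-z)/2) by (eapply Rle_trans; [apply Rmin_r|apply Rmin_r]).
    assert (nz : forall w, p <= w <= q -> w <> z -> Rabs (w - z) <= d1 -> phi w <> 0).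
    { intros w Hw Hne Hd E. specialize (Hiso w (Hz w Hw E) Hne). lra. }
    assert (nzL : forall x, 0 < x <= d1 -> phi (z - d1) * phi (z - x) > 0).
    { intros x Hx. apply (sign_same phi p q); [exact Hc|lra|lra|]. intros w Hw. unfold Rmin, Rmax in Hw; destruct (Rle_dec _ _);
      (apply (nz w); [lra|lra|unfold Rabs; destruct (Rcase_abs (w - z)); lra]). }
    assert (nzR : forall x, 0 < x <= d1 -> phi (z + d1) * phi (z + x) > 0).
    { intros x Hx. apply (sign_same phi p q); [exact Hc|lra|lra|]. intros w Hw. unfold Rmin, Rmax in Hw; destruct (Rle_dec _ _);
      (apply (nz w); [lra|lra|unfold Rabs; destruct (Rcase_abs (w - z)); lra]). }
    assert (sL : phi (z - d1) <> 0) by (apply nz; [lra|lra|unfold Rabs; destruct (Rcase_abs _); lra]).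
    assert (sR : phi (z + d1) <> 0) by (apply nz; [lra|lra|unfold Rabs; destruct (Rcase_abs _); lra]).
    destruct (Rlt_dec (phi (z - d1) * phi (z + d1)) 0) as [Hneg|Hpos].
    + exists z. split; [lra|]. split; auto. exists d1. split; auto. split; [lra|]. split; [lra|].
      intros x Hx. eapply prod_neg_sign. exact Hneg.
      specialize (nzL x Hx). nra. specialize (nzR x Hx). nra.
    + assert (Hpos' : phi (z - d1) * phi (z + d1) > 0).
      { assert (phi (z - d1) * phi (z + d1) <> 0) by (apply Rmult_integral_contrapositive; auto). lra. }
      assert (Hl' : (length (remove Req_EM_T z l) <= N)%nat).
      { pose proof (remove_length_lt Req_EM_T l z Hzl). lia. }
      destruct (Rlt_dec (phi p * phi (z - d1)) 0) as [HL|HL].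
      * destruct (IHN (remove Req_EM_T z l) phi p (z - d1) Hl' ltac:(lra)) as [z' [Hz' [E' [d [Hd [H1 [H2 H3]]]]]]].
        { eapply cont_on_sub; eauto; lra. }
        { auto. }
        { intros x Hx Ex. apply in_in_remove. lra. apply Hz; auto; lra. }
        exists z'. split; [lra|]. split; auto. exists d. repeat split; auto; lra.
      * assert (HR : phi (z + d1) * phi q < 0).
        { assert (phi p * phi (z - d1) <> 0) by (apply Rmult_integral_contrapositive; split; auto; intro E; rewrite E in Hs; lra).
          assert (phi p * phi (z - d1) > 0) by lra.
          eapply prod_neg_sign with (a := phi p) (b := phi q); auto. nra. nra. }
        destruct (IHN (remove Req_EM_T z l) phi (z + d1) q Hl' ltac:(lra)) as [z' [Hz' [E' [d [Hd [H1 [H2 H3]]]]]]].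
        { eapply cont_on_sub; eauto; lra. }
        { auto. }
        { intros x Hx Ex. apply in_in_remove. lra. apply Hz; auto; lra. }
        exists z'. split; [lra|]. split; auto. exists d. repeat split; auto; lra.
Qed.

Fixpoint rs (f : nat -> R) (N : nat) : R :=
  match N with O => 0 | S N' => rs f N' + f N' end.

Lemma rs_le f g N : (forall i, (i < N)%nat -> f i <= g i) -> rs f N <= rs g N.
Proof. induction N; simpl; intros H. lra. assert (f N <= g N) by (apply H; lia).
  assert (rs f N <= rs g N) by (apply IHN; intros; apply H; lia). lra. Qed.

Lemma rs_ext f g N : (forall i, (i < N)%nat -> f i = g i) -> rs f N = rs g N.
Proof. induction N; simpl; intros H. lra. rewrite H by lia. rewrite IHN; auto. Qed.

Lemma rs_plus f g N : rs (fun i => f i + g i) N = rs f N + rs g N.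
Proof. induction N; simpl. lra. rewrite IHN. lra. Qed.

Lemma rs_scal c f N : rs (fun i => c * f i) N = c * rs f N.
Proof. induction N; simpl. lra. rewrite IHN. lra. Qed.

Lemma rs_const c N : rs (fun _ => c) N = INR N * c.
Proof. induction N; simpl rs. simpl; lra. rewrite IHN, S_INR. lra. Qed.

Lemma rs_tele (phi : nat -> R) N : rs (fun i => phi i - phi (S i)) N = phi O - phi N.
Proof. induction N; simpl. lra. rewrite IHN. lra. Qed.

Lemma len_flat_seq {B} (g : nat -> list B) N :
  INR (length (flat_map g (seq 0 N))) = rs (fun i => INR (length (g i))) N.
Proof.
  induction N. reflexivity.
  rewrite seq_S, flat_map_app, length_app, plus_INR, IHN. simpl. rewrite app_nil_r. reflexivity.
Qed.

Lemma len_flat_const {A B} (g : A -> list B) l m :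
  (forall x, In x l -> length (g x) = m) -> length (flat_map g l) = (m * length l)%nat.
Proof.
  induction l; intros H; simpl. lia. rewrite length_app. rewrite (H a (or_introl eq_refl)).
  rewrite IHl. lia. intros; apply H; right; auto.
Qed.

Definition K (n : nat) : nat := (2 ^ n)%nat.

Lemma K_pos n : (1 <= K n)%nat.
Proof. unfold K. induction n; simpl; lia. Qed.

Lemma K_INR_pos n : 0 < INR (K n).
Proof. apply lt_0_INR. pose proof (K_pos n); lia. Qed.

Lemma K_split k n : (k <= n)%nat -> K n = (K k * K (n - k))%nat.
Proof. intros. unfold K. rewrite <- Nat.pow_add_r. f_equal. lia. Qed.

Lemma K_S n : K (S n) = (2 * K n)%nat.
Proof. unfold K. simpl. lia. Qed.

Lemma INR_lt_pow n : INR n < INR (K n).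
Proof. induction n. simpl. lra. rewrite K_S, mult_INR, S_INR.
  replace (INR 2) with 2 by (simpl; lra). pose proof (le_INR _ _ (K_pos n)). simpl in H. lra. Qed.

Definition wd (P Q : R) n := (Q - P) / INR (K n).
Definition tp (P Q : R) n (i : nat) := P + INR i * wd P Q n.
Definition incell P Q n i x := tp P Q n i <= x <= tp P Q n (S i).

Lemma wd_pos P Q n : P < Q -> 0 < wd P Q n.
Proof. intros. unfold wd. apply Rdiv_lt_0_compat. lra. apply K_INR_pos. Qed.

Lemma tp_K P Q n : tp P Q n (K n) = Q.
Proof. unfold tp, wd. field. apply Rgt_not_eq, K_INR_pos. Qed.

Lemma tp_mono P Q n i j : P < Q -> (i <= j)%nat -> tp P Q n i <= tp P Q n j.
Proof. intros. unfold tp. apply le_INR in H0. pose proof (wd_pos P Q n H). nra. Qed.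

Lemma tp_0 P Q n : tp P Q n 0 = P.
Proof. unfold tp. simpl. ring. Qed.

Lemma incell_in P Q n i x : P < Q -> (i < K n)%nat -> incell P Q n i x -> P <= x <= Q.
Proof.
  intros H Hi [H1 H2]. pose proof (tp_mono P Q n 0 i H ltac:(lia)).
  pose proof (tp_mono P Q n (S i) (K n) H ltac:(lia)). rewrite tp_0 in *. rewrite tp_K in *. lra.
Qed.

Lemma cell_gen : forall r A w x, 0 < w -> A <= x <= A + INR (S r) * w ->
  exists j, (j <= r)%nat /\ A + INR j * w <= x <= A + INR (S j) * w.
Proof.
  induction r; intros A w x Hw Hx.
  - exists 0%nat. split. lia. simpl in *. lra.
  - destruct (Rle_dec x (A + INR (S r) * w)).
    + destruct (IHr A w x Hw) as [j [Hj Hj']]. lra. exists j; split; auto.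
    + exists (S r). split. lia. lra.
Qed.

Lemma cell_exists P Q n x : P < Q -> P <= x <= Q -> exists i, (i < K n)%nat /\ incell P Q n i x.
Proof.
  intros H Hx. pose proof (K_pos n).
  destruct (cell_gen (K n - 1) P (wd P Q n) x (wd_pos P Q n H)) as [j [Hj Hj']].
  - replace (S (K n - 1)) with (K n) by lia. fold (tp P Q n (K n)). rewrite tp_K. lra.
  - exists j. split. lia. exact Hj'.
Qed.

Lemma wd_split P Q k n : (k <= n)%nat -> wd P Q k = INR (K (n - k)) * wd P Q n.
Proof.
  intros H. unfold wd. rewrite (K_split k n H), mult_INR. field.
  split; apply Rgt_not_eq, K_INR_pos.
Qed.

Lemma cell_refine P Q k n i x : P < Q -> (k <= n)%nat -> incell P Q k i x ->
  exists j, (i * K (n - k) <= j < S i * K (n - k))%nat /\ incell P Q n j x.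
Proof.
  intros H Hkn [H1 H2]. set (r := K (n - k)). pose proof (K_pos (n - k)).
  destruct (cell_gen (r - 1) (tp P Q n (i * r)) (wd P Q n) x (wd_pos P Q n H)) as [j [Hj Hj']].
  - unfold tp in *. rewrite (wd_split P Q k n Hkn) in H1, H2. fold r in H1, H2.
    rewrite mult_INR. replace (S (r - 1)) with r by (unfold r; lia). rewrite S_INR in H2. nra.
  - exists (i * r + j)%nat. split. unfold r in *; nia.
    unfold incell, tp in *. rewrite plus_INR, mult_INR in *. rewrite S_INR in *.
    rewrite plus_INR, mult_INR. lra.
Qed.

Definition core_hyp (F G : R -> R) (P Q g0 : R) := P < Q /\ 0 < g0 /\
  (forall x y, P <= x -> x <= y -> y <= Q -> F y <= F x) /\
  (forall x y, P <= x -> x <= y -> y <= Q -> G y <= G x) /\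
  (forall x, P <= x <= Q -> 0 <= F x <= 1) /\
  (forall x, P <= x <= Q -> g0 <= G x) /\ cont_on F P Q /\ cont_on G P Q.

Definition hh (F G : R -> R) x := F x / G x.

Lemma ratio_bound g0 F1 F2 G1 G2 dF dG : 0 < g0 -> g0 <= G1 -> g0 <= G2 -> 0 <= F2 <= 1 ->
  Rabs (F1 - F2) <= dF -> Rabs (G1 - G2) <= dG ->
  Rabs (F1 / G1 - F2 / G2) <= dF / g0 + dG / (g0 * g0).
Proof.
  intros Hg H1 H2 HF HdF HdG.
  replace (F1 / G1 - F2 / G2) with ((F1 - F2) * / G1 + F2 * (G2 - G1) * / (G1 * G2)) by (field; lra).
  eapply Rle_trans. apply Rabs_triang. rewrite !Rabs_mult.
  rewrite (Rabs_pos_eq (/ G1)) by (left; apply Rinv_0_lt_compat; lra).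
  rewrite (Rabs_pos_eq (/ (G1 * G2))) by (left; apply Rinv_0_lt_compat; nra).
  rewrite (Rabs_pos_eq F2) by lra. rewrite <- Rabs_Ropp, Ropp_minus_distr in HdG.
  apply Rplus_le_compat.
  - unfold Rdiv. apply Rmult_le_compat; try lra. apply Rabs_pos. left; apply Rinv_0_lt_compat; lra.
    apply Rinv_le_contravar; lra.
  - unfold Rdiv. apply Rmult_le_compat. pose proof (Rabs_pos (G2 - G1)); nra.
    left; apply Rinv_0_lt_compat; nra.
    pose proof (Rabs_pos (G2 - G1)); nra. apply Rinv_le_contravar; nra.
Qed.

Definition Bv F G P Q g0 n i :=
  (F (tp P Q n i) - F (tp P Q n (S i))) / g0 + (G (tp P Q n i) - G (tp P Q n (S i))) / (g0 * g0).

Lemma tp_range P Q n i : P < Q -> (i <= K n)%nat -> P <= tp P Q n i <= Q.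
Proof.
  intros H Hi. pose proof (tp_mono P Q n 0 i H ltac:(lia)). pose proof (tp_mono P Q n i (K n) H Hi).
  rewrite tp_0 in *; rewrite tp_K in *; lra.
Qed.

Lemma osc F G P Q g0 n i x x' : core_hyp F G P Q g0 -> (i < K n)%nat ->
  incell P Q n i x -> incell P Q n i x' -> Rabs (hh F G x - hh F G x') <= Bv F G P Q g0 n i.
Proof.
  intros (HPQ & Hg & HFm & HGm & HF & HG & _ & _) Hi Hx Hx'.
  pose proof (tp_range P Q n i HPQ ltac:(lia)). pose proof (tp_range P Q n (S i) HPQ ltac:(lia)).
  destruct Hx, Hx'. unfold hh, Bv. apply ratio_bound; auto; try (apply HG; lra). apply HF; lra.
  - assert (F x <= F (tp P Q n i)) by (apply HFm; lra). assert (F (tp P Q n (S i)) <= F x) by (apply HFm; lra).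
    assert (F x' <= F (tp P Q n i)) by (apply HFm; lra). assert (F (tp P Q n (S i)) <= F x') by (apply HFm; lra).
    unfold Rabs; destruct Rcase_abs; lra.
  - assert (G x <= G (tp P Q n i)) by (apply HGm; lra). assert (G (tp P Q n (S i)) <= G x) by (apply HGm; lra).
    assert (G x' <= G (tp P Q n i)) by (apply HGm; lra). assert (G (tp P Q n (S i)) <= G x') by (apply HGm; lra).
    unfold Rabs; destruct Rcase_abs; lra.
Qed.

Lemma Bv_nonneg F G P Q g0 n i : core_hyp F G P Q g0 -> (i < K n)%nat -> 0 <= Bv F G P Q g0 n i.
Proof.
  intros (HPQ & Hg & HFm & HGm & _) Hi.
  pose proof (tp_range P Q n i HPQ ltac:(lia)). pose proof (tp_range P Q n (S i) HPQ ltac:(lia)).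
  pose proof (tp_mono P Q n i (S i) HPQ ltac:(lia)).
  assert (F (tp P Q n (S i)) <= F (tp P Q n i)) by (apply HFm; lra).
  assert (G (tp P Q n (S i)) <= G (tp P Q n i)) by (apply HGm; lra).
  unfold Bv. apply Rplus_le_le_0_compat; unfold Rdiv; apply Rmult_le_pos; try lra; left; apply Rinv_0_lt_compat; nra.
Qed.

Lemma Bv_sum F G P Q g0 n : core_hyp F G P Q g0 ->
  rs (Bv F G P Q g0 n) (K n) = (F P - F Q) / g0 + (G P - G Q) / (g0 * g0).
Proof.
  intros (HPQ & Hg & _).
  rewrite (rs_ext _ (fun i => (fun j => F (tp P Q n j) / g0 + G (tp P Q n j) / (g0 * g0)) i -
      (fun j => F (tp P Q n j) / g0 + G (tp P Q n j) / (g0 * g0)) (S i))).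
  rewrite rs_tele. rewrite tp_0, tp_K. field. lra.
  intros i _. unfold Bv. field. lra.
Qed.

Definition ExP F G P Q n m y := exists I : list nat, NoDup I /\ length I = m /\
  forall i, In i I -> (i < K n)%nat /\ exists x, incell P Q n i x /\ hh F G x = y.
Definition NrP F G P Q e n m y := exists I : list nat, NoDup I /\ length I = m /\
  forall i, In i I -> (i < K n)%nat /\ exists x, incell P Q n i x /\ Rabs (hh F G x - y) < e.

Lemma Ex_nested F G P Q k n m y : P < Q -> (k <= n)%nat -> ExP F G P Q k m y -> ExP F G P Q n m y.
Proof.
  intros HPQ Hkn [I [HI [HL Hi]]]. set (r := K (n - k)).
  set (f := fun i => epsilon (inhabits 0%nat) (fun j => (i * r <= j < S i * r)%nat /\
       exists x, incell P Q n j x /\ hh F G x = y)).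
  assert (Hf : forall i, In i I -> (i * r <= f i < S i * r)%nat /\ exists x, incell P Q n (f i) x /\ hh F G x = y).
  { intros i Hin. unfold f. apply epsilon_spec. destruct (Hi i Hin) as [_ [x [Hx Ex]]].
    destruct (cell_refine P Q k n i x HPQ Hkn Hx) as [j [Hj Hj']]. exists j. split; auto. exists x; auto. }
  exists (map f I). split; [|split].
  - apply NoDup_map_NoDup_ForallPairs; auto. intros a b Ha Hb E.
    destruct (Hf a Ha) as [Ra _]. destruct (Hf b Hb) as [Rb _]. rewrite E in Ra.
    destruct (Nat.lt_trichotomy a b) as [L|[L|L]]; auto; exfalso; nia.
  - rewrite length_map; auto.
  - intros j Hj. apply in_map_iff in Hj. destruct Hj as [i [<- Hin]].
    destruct (Hf i Hin) as [R1 R2]. split; auto. destruct (Hi i Hin) as [Hik _].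
    rewrite (K_split k n Hkn). fold r. nia.
Qed.

Lemma many_points F G P Q y : (forall l, exists x, P <= x <= Q /\ hh F G x = y /\ ~ In x l) ->
  forall m, exists pts, NoDup pts /\ length pts = m /\ forall x, In x pts -> P <= x <= Q /\ hh F G x = y.
Proof.
  intros H m. induction m.
  - exists nil. split. constructor. split. reflexivity. intros z [].
  - destruct IHm as [pts [N [L A]]]. destruct (H pts) as [x [Hx [Ex Nx]]].
    exists (x :: pts). split. constructor; auto. split. simpl; auto.
    intros z [<-|Hz]; auto.
Qed.

Lemma sep_list (pts : list R) : exists d, 0 < d /\ forall x x', In x pts -> In x' pts -> x <> x' -> d <= Rabs (x - x').
Proof.
  destruct (common_pos pts (fun x r => forall w, In w pts -> w <> x -> r <= Rabs (x - w))) as [d [Hd H]].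
  - intros x _. destruct (isolate pts x) as [d [Hd Hi]]. exists d. split; auto.
    intros r' Hr' w Hw Hne. rewrite Rabs_minus_sym. specialize (Hi w Hw Hne). lra.
  - exists d. split; auto. intros x x' Hx Hx' Hne. apply (H x Hx d); auto. lra.
Qed.

Lemma Ex_many F G P Q y : P < Q -> (forall l, exists x, P <= x <= Q /\ hh F G x = y /\ ~ In x l) ->
  forall m, exists n, ExP F G P Q n m y.
Proof.
  intros HPQ H m. destruct (many_points F G P Q y H m) as [pts [N [L A]]].
  destruct (sep_list pts) as [d [Hd Hsep]].
  destruct (INR_unbounded ((Q - P) / d)) as [n Hn].
  assert (Hw : wd P Q n < d).
  { unfold wd. pose proof (INR_lt_pow n). pose proof (K_INR_pos n).
    apply Rmult_lt_reg_r with (INR (K n)); auto. unfold Rdiv. rewrite Rmult_assoc, Rinv_l by lra.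
    rewrite Rmult_1_r. apply Rmult_lt_reg_r with (/ d). apply Rinv_0_lt_compat; auto.
    replace (d * INR (K n) * / d) with (INR (K n)) by (field; lra). unfold Rdiv in Hn. lra. }
  exists n. set (c := fun x => epsilon (inhabits 0%nat) (fun i => (i < K n)%nat /\ incell P Q n i x)).
  assert (Hc : forall x, In x pts -> (c x < K n)%nat /\ incell P Q n (c x) x).
  { intros x Hx. unfold c. apply epsilon_spec. apply cell_exists; auto. apply A; auto. }
  exists (map c pts). split; [|split].
  - apply NoDup_map_NoDup_ForallPairs; auto. intros a b Ha Hb E.
    destruct (Req_dec a b) as [|Hne]; auto. exfalso.
    destruct (Hc a Ha) as [_ [H1 H2]]. destruct (Hc b Hb) as [_ [H3 H4]]. rewrite E in H1, H2.
    specialize (Hsep a b Ha Hb Hne). unfold tp in *. rewrite S_INR in *.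
    assert (Rabs (a - b) <= wd P Q n) by (unfold Rabs; destruct Rcase_abs; lra). lra.
  - rewrite length_map; auto.
  - intros i Hi. apply in_map_iff in Hi. destruct Hi as [x [<- Hx]]. destruct (Hc x Hx).
    split; auto. exists x. split; auto. apply A; auto.
Qed.

Lemma Nr_open F G P Q e n m y : NrP F G P Q e n m y ->
  exists r, 0 < r /\ forall y', Rabs (y' - y) < r -> NrP F G P Q e n m y'.
Proof.
  intros [I [N [L Hi]]].
  destruct (common_pos I (fun i r => forall y', Rabs (y' - y) < r ->
       exists x, incell P Q n i x /\ Rabs (hh F G x - y') < e)) as [r [Hr H]].
  - intros i Hin. destruct (Hi i Hin) as [_ [x [Hx Ex]]]. exists (e - Rabs (hh F G x - y)).
    split. lra. intros r' Hr' y' Hy'. exists x. split; auto.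
    replace (hh F G x - y') with ((hh F G x - y) + (y - y')) by ring.
    eapply Rle_lt_trans. apply Rabs_triang. rewrite Rabs_minus_sym in Hy'. lra.
  - exists r. split; auto. intros y' Hy'. exists I. split; auto. split; auto.
    intros i Hin. split. apply (Hi i Hin). apply (H i Hin r); auto. lra.
Qed.

Lemma Ex_Nr F G P Q e n m y : 0 < e -> ExP F G P Q n m y -> NrP F G P Q e n m y.
Proof.
  intros He [I [N [L Hi]]]. exists I. split; auto. split; auto. intros i Hin.
  destruct (Hi i Hin) as [Hk [x [Hx Ex]]]. split; auto. exists x. split; auto.
  rewrite Ex. replace (y - y) with 0 by ring. rewrite Rabs_R0. auto.
Qed.

Lemma strip F G P Q e n m y : NrP F G P Q e n m y -> ~ ExP F G P Q n m y ->
  exists i, (i < K n)%nat /\ (exists x, incell P Q n i x /\ Rabs (hh F G x - y) < e) /\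
    ~ (exists x, incell P Q n i x /\ hh F G x = y).
Proof.
  intros [I [N [L Hi]]] HE. apply NNPP. intros C. apply HE. exists I. split; auto. split; auto.
  intros i Hin. destruct (Hi i Hin) as [Hk Hx]. split; auto.
  apply NNPP. intros C2. apply C. exists i. auto.
Qed.

Lemma hh_sign F G x y : 0 < G x -> (hh F G x - y) * G x = F x - y * G x.
Proof. intros. unfold hh. field. lra. Qed.

Lemma side F G P Q g0 n i y : core_hyp F G P Q g0 -> (i < K n)%nat ->
  ~ (exists x, incell P Q n i x /\ hh F G x = y) ->
  (forall x, incell P Q n i x -> hh F G x < y) \/ (forall x, incell P Q n i x -> hh F G x > y).
Proof.
  intros Hc Hi Hn. pose proof Hc as (HPQ & Hg & HFm & HGm & HF & HG & CF & CG).
  destruct (classic (forall x, incell P Q n i x -> hh F G x < y)) as [A|A]; [left; auto|].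
  destruct (classic (forall x, incell P Q n i x -> hh F G x > y)) as [B|B]; [right; auto|].
  exfalso. apply not_all_ex_not in A. destruct A as [x1 A]. apply imply_to_and in A. destruct A as [H1 A].
  apply not_all_ex_not in B. destruct B as [x2 B]. apply imply_to_and in B. destruct B as [H2 B].
  pose proof (incell_in P Q n i x1 HPQ Hi H1). pose proof (incell_in P Q n i x2 HPQ Hi H2).
  assert (G1 : 0 < G x1) by (specialize (HG x1 H); lra).
  assert (G2 : 0 < G x2) by (specialize (HG x2 H0); lra).
  destruct (IVT_gen (fun x => F x - y * G x) P Q x1 x2) as [z [Hz Ez]]; auto.
  - apply cont_on_minus; auto. apply cont_on_lin; auto.
  - rewrite <- !hh_sign by auto. assert (hh F G x1 - y >= 0) by lra. assert (hh F G x2 - y <= 0) by lra.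
    replace ((hh F G x1 - y) * G x1 * ((hh F G x2 - y) * G x2)) with
      (((hh F G x1 - y) * (hh F G x2 - y)) * (G x1 * G x2)) by ring.
    assert ((hh F G x1 - y) * (hh F G x2 - y) <= 0) by nra. assert (0 < G x1 * G x2) by (apply Rmult_lt_0_compat; auto). nra.
  - apply Hn. exists z. destruct H1, H2. split.
    unfold Rmin, Rmax in Hz; destruct Rle_dec; unfold incell; lra.
    assert (P <= z <= Q) by (unfold Rmin, Rmax in Hz; destruct Rle_dec; lra).
    assert (0 < G z) by (specialize (HG z H5); lra).
    rewrite <- hh_sign in Ez by auto. apply Rmult_integral in Ez. destruct Ez; lra.
Qed.

Lemma HB (O : nat -> R -> Prop) a b : a <= b ->
  (forall k y, O k y -> exists r, 0 < r /\ forall y', Rabs (y' - y) < r -> O k y') ->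
  (forall y, a <= y <= b -> exists k, O k y) ->
  exists n, forall y, a <= y <= b -> exists k, (k <= n)%nat /\ O k y.
Proof.
  intros Hab Hop Hcov.
  set (A := fun x => a <= x <= b /\ exists n, forall y, a <= y <= x -> exists k, (k <= n)%nat /\ O k y).
  assert (Aa : A a).
  { split. lra. destruct (Hcov a ltac:(lra)) as [k Hk]. exists k. intros y Hy.
    exists k. split; auto. replace y with a by lra. auto. }
  destruct (completeness A) as [c [Hub Hlub]].
  { exists b. intros x [Hx _]. lra. } { exists a; auto. }
  assert (c1 : a <= c) by (apply Hub; auto).
  assert (c2 : c <= b) by (apply Hlub; intros x [Hx _]; lra).
  destruct (Hcov c ltac:(lra)) as [k0 Hk0]. destruct (Hop k0 c Hk0) as [r [Hr Hball]].
  assert (Ex : exists x, A x /\ c - r < x).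
  { apply NNPP. intros C. assert (c <= c - r). { apply Hlub. intros x Hx.
      destruct (Rle_dec x (c - r)); auto. exfalso. apply C. exists x. split; auto. lra. } lra. }
  destruct Ex as [x [[Hx [n1 Hn1]] Hxc]].
  assert (Claim : forall z, z < c + r -> forall y, a <= y <= z -> exists k, (k <= Nat.max n1 k0)%nat /\ O k y).
  { intros z Hz y Hy. destruct (Rle_dec y x).
    - destruct (Hn1 y ltac:(lra)) as [k [Hk Ok]]. exists k. split; auto. lia.
    - exists k0. split. lia. apply Hball. unfold Rabs; destruct Rcase_abs; lra. }
  destruct (Rlt_dec b (c + r)).
  - exists (Nat.max n1 k0). intros y Hy. apply (Claim b); auto.
  - exfalso. assert (A (c + r/2)). { split. lra. exists (Nat.max n1 k0). apply Claim. lra. }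
    specialize (Hub _ H). lra.
Qed.

Lemma nat_ceil r : 0 <= r -> exists t : nat, r <= INR t <= r + 1.
Proof.
  intros Hr. destruct (INR_unbounded r) as [n Hn]. revert Hn. induction n; intros Hn.
  - simpl in Hn. lra.
  - destruct (Rlt_dec r (INR n)). auto. exists (S n). rewrite S_INR in *. lra.
Qed.

Lemma window (S : nat -> Prop) r : 0 <= r -> (forall l l', S l -> S l' -> INR l - INR l' <= r) ->
  exists L : list nat, INR (length L) <= 2 * r + 3 /\ forall l, S l -> In l L.
Proof.
  intros Hr H. destruct (classic (exists l0, S l0)) as [[l0 H0]|N].
  - destruct (nat_ceil r Hr) as [t Ht]. exists (seq (l0 - t) (2 * t + 1)). split.
    + rewrite length_seq, plus_INR, mult_INR. simpl. lra.
    + intros l Hl. apply in_seq. pose proof (H l l0 Hl H0). pose proof (H l0 l H0 Hl).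
      assert (INR l <= INR (l0 + t)) by (rewrite plus_INR; lra).
      assert (INR l0 <= INR (l + t)) by (rewrite plus_INR; lra).
      apply INR_le in H3. apply INR_le in H4. lia.
  - exists nil. split. simpl. lra. intros l Hl. exfalso. apply N. exists l; auto.
Qed.

Lemma rs_invK N : rs (fun k => / INR (K k)) N = 2 - 2 / INR (K N).
Proof.
  induction N. simpl. unfold K; simpl. lra.
  simpl rs. rewrite IHN. rewrite K_S, mult_INR. replace (INR 2) with 2 by (simpl; lra).
  pose proof (K_INR_pos N). field. lra.
Qed.

Lemma rs_K N : rs (fun k => INR (K k)) N = INR (K N) - 1.
Proof.
  induction N. simpl. unfold K; simpl. lra.
  simpl rs. rewrite IHN. rewrite K_S, mult_INR. replace (INR 2) with 2 by (simpl; lra). lra.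
Qed.

Lemma NoDup_flat {A B} (g : A -> list B) l : NoDup l -> (forall x, In x l -> NoDup (g x)) ->
  (forall x y z, In x l -> In y l -> x <> y -> In z (g x) -> ~ In z (g y)) -> NoDup (flat_map g l).
Proof.
  induction l as [|a l IH]; intros N H D; simpl. constructor.
  apply NoDup_cons_iff in N. destruct N as [Na Nl]. apply NoDup_app. apply H; left; auto.
  apply IH; auto. intros; apply H; right; auto. intros x y z Hx Hy; apply D; right; auto.
  intros z Hz Hz'. apply in_flat_map in Hz'. destruct Hz' as [y [Hy Hzy]].
  assert (a <> y) by (intro E; subst; auto).
  exact (D a y z (or_introl eq_refl) (or_intror Hy) H0 Hz Hzy).
Qed.

Lemma incl_flat_seq {B} (g : nat -> list B) n l : In l (flat_map g (seq 0 n)) <-> exists i, (i < n)%nat /\ In l (g i).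
Proof.
  rewrite in_flat_map. split; intros [i [H1 H2]]; exists i; split; auto; apply in_seq in H1 || apply in_seq; lia.
Qed.

Theorem core F G P Q g0 a b : core_hyp F G P Q g0 -> a < b ->
  exists y, a < y < b /\ exists l, forall x, P <= x <= Q -> F x - y * G x = 0 -> In x l.
Proof.
  intros Hc Hab. pose proof Hc as (HPQ & Hg & HFm & HGm & HF & HG & CF & CG).
  apply NNPP; intros Cn.
  assert (Hbad : forall y, a < y < b -> forall l, exists x, P <= x <= Q /\ hh F G x = y /\ ~ In x l).
  { intros y Hy l. apply NNPP; intros C. apply Cn. exists y. split; auto. exists l.
    intros x Hx E. apply NNPP; intros Nx. apply C. exists x. split; auto. split; auto.
    assert (0 < G x) by (specialize (HG x Hx); lra).
    unfold hh. apply Rminus_diag_uniq in E. rewrite E. field. lra. }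
  set (a' := (3 * a + b) / 4). set (b' := (a + 3 * b) / 4). set (Dd := b' - a').
  assert (HD : 0 < Dd) by (unfold Dd, a', b'; lra).
  set (ec := Dd / 16). set (e := fun k => ec / (INR (K k) * INR (K k))).
  assert (He : forall k, 0 < e k).
  { intros k. unfold e, ec. pose proof (K_INR_pos k). apply Rdiv_lt_0_compat. lra. nra. }
  set (V := (F P - F Q) / g0 + (G P - G Q) / (g0 * g0)).
  assert (HV : 0 <= V).
  { unfold V. assert (F Q <= F P) by (apply HFm; lra). assert (G Q <= G P) by (apply HGm; lra).
    apply Rplus_le_le_0_compat; unfold Rdiv; apply Rmult_le_pos; try lra; left; apply Rinv_0_lt_compat; nra. }
  destruct (INR_unbounded (4 * V / Dd + 2)) as [m Hm].
  destruct (HB (fun k y => NrP F G P Q (e k) k m y) a' b') as [n Hn].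
  { unfold a', b'; lra. }
  { intros k y Hk. apply Nr_open; auto. }
  { intros y Hy. assert (a < y < b) by (unfold a', b' in Hy; lra).
    destruct (Ex_many F G P Q y HPQ (Hbad y H) m) as [k Hk]. exists k. apply Ex_Nr; auto. }
  set (Kn := K n). pose proof (K_INR_pos n) as HKn. fold Kn in HKn.
  set (L := (12 * m * Kn + 3 * Kn + 1)%nat).
  assert (HL0 : 0 < INR L) by (apply lt_0_INR; unfold L; lia).
  set (s := Dd / INR L). assert (Hs : 0 < s) by (apply Rdiv_lt_0_compat; auto).
  set (yl := fun l : nat => a' + INR l * s).
  assert (Hyl : forall l, (l < L)%nat -> a' <= yl l <= b').
  { intros l Hl. apply lt_INR in Hl. unfold yl. assert (INR l * s <= Dd).
    { unfold s. apply Rmult_le_reg_r with (INR L); auto. unfold Rdiv.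
      replace (INR l * (Dd * / INR L) * INR L) with (INR l * Dd) by (field; lra). pose proof (pos_INR l); nra. }
    pose proof (pos_INR l). unfold Dd in H. nra. }
  assert (Hdiff : forall l l', INR l - INR l' = (yl l - yl l') / s).
  { intros. unfold yl. field. lra. }
  set (gb := fun l => if excluded_middle_informative (ExP F G P Q n m (yl l)) then true else false).
  set (Gl := filter gb (seq 0 L)). set (Bl := filter (fun l => negb (gb l)) (seq 0 L)).
  assert (Hsplit : INR L <= INR (length Gl) + INR (length Bl)).
  { rewrite <- plus_INR, <- length_app. apply le_INR.
    replace L with (length (seq 0 L)) at 1 by apply length_seq.
    apply NoDup_incl_length. apply seq_NoDup. intros l Hl. apply in_or_app.
    destruct (gb l) eqn:E; [left|right]; apply filter_In; rewrite E; auto. }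
  set (Sa := fun k i l => (l < L)%nat /\ (exists x, incell P Q k i x /\ Rabs (hh F G x - yl l) < e k) /\
                          (forall x, incell P Q k i x -> hh F G x < yl l)).
  set (Sb := fun k i l => (l < L)%nat /\ (exists x, incell P Q k i x /\ Rabs (hh F G x - yl l) < e k) /\
                          (forall x, incell P Q k i x -> hh F G x > yl l)).
  set (Wa := fun k i => epsilon (inhabits nil) (fun W : list nat => INR (length W) <= 2 * (e k / s) + 3 /\ forall l, Sa k i l -> In l W)).
  set (Wb := fun k i => epsilon (inhabits nil) (fun W : list nat => INR (length W) <= 2 * (e k / s) + 3 /\ forall l, Sb k i l -> In l W)).
  assert (HWa : forall k i, INR (length (Wa k i)) <= 2 * (e k / s) + 3 /\ forall l, Sa k i l -> In l (Wa k i)).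
  { intros k i. unfold Wa. apply epsilon_spec. apply window.
    left; apply Rdiv_lt_0_compat; auto.
    intros l l' [_ [[x [Hx Ex]] _]] [_ [_ A']]. rewrite Hdiff. specialize (A' x Hx).
    unfold Rdiv; apply Rmult_le_compat_r; [left; apply Rinv_0_lt_compat; auto|].
    unfold Rabs in Ex; destruct Rcase_abs in Ex; lra. }
  assert (HWb : forall k i, INR (length (Wb k i)) <= 2 * (e k / s) + 3 /\ forall l, Sb k i l -> In l (Wb k i)).
  { intros k i. unfold Wb. apply epsilon_spec. apply window.
    left; apply Rdiv_lt_0_compat; auto.
    intros l l' [_ [_ A]] [_ [[x [Hx Ex]] _]]. rewrite Hdiff. specialize (A x Hx).
    unfold Rdiv; apply Rmult_le_compat_r; [left; apply Rinv_0_lt_compat; auto|].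
    unfold Rabs in Ex; destruct Rcase_abs in Ex; lra. }
  assert (HBl : INR (length Bl) <= INR L / 2 + 12 * INR Kn).
  { apply Rle_trans with (INR (length (flat_map (fun k => flat_map (fun i => Wa k i ++ Wb k i) (seq 0 (K k))) (seq 0 (S n))))).
    - apply le_INR. apply NoDup_incl_length. apply NoDup_filter, seq_NoDup.
      intros l Hl. apply filter_In in Hl. destruct Hl as [Hl Hg']. apply in_seq in Hl.
      assert (NE : ~ ExP F G P Q n m (yl l)).
      { unfold gb in Hg'. destruct excluded_middle_informative; simpl in Hg'; auto; discriminate. }
      destruct (Hn (yl l) (Hyl l ltac:(lia))) as [k [Hk Nk]].
      assert (NEk : ~ ExP F G P Q k m (yl l)) by (intro X; apply NE; eapply Ex_nested; eauto).
      destruct (strip F G P Q (e k) k m (yl l) Nk NEk) as [i [Hi [Near NEx]]].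
      apply incl_flat_seq. exists k. split. lia. apply incl_flat_seq. exists i. split; auto.
      apply in_or_app. destruct (side F G P Q g0 k i (yl l) Hc Hi NEx) as [S1|S1].
      + left. apply (proj2 (HWa k i)). split. lia. split; auto.
      + right. apply (proj2 (HWb k i)). split. lia. split; auto.
    - rewrite len_flat_seq.
      apply Rle_trans with (rs (fun k => INR L / 4 * / INR (K k) + 6 * INR (K k)) (S n)).
      + apply rs_le. intros k Hk. rewrite len_flat_seq.
        apply Rle_trans with (rs (fun _ => 4 * (e k / s) + 6) (K k)).
        * apply rs_le. intros i Hi. rewrite length_app, plus_INR.
          pose proof (proj1 (HWa k i)). pose proof (proj1 (HWb k i)). lra.
        * rewrite rs_const. unfold e, ec, s. pose proof (K_INR_pos k). right. field. lra.
      + rewrite rs_plus, rs_scal, rs_scal, rs_invK, rs_K. rewrite K_S, mult_INR. fold Kn.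
        replace (INR 2) with 2 by (simpl; lra).
        assert (0 <= INR L / 4 * (2 / (2 * INR Kn))).
        { unfold Rdiv. apply Rmult_le_pos. lra. apply Rmult_le_pos. lra. left; apply Rinv_0_lt_compat; lra. }
        lra. }
  set (Se := fun i l => (l < L)%nat /\ exists x, incell P Q n i x /\ hh F G x = yl l).
  set (Lam := fun i => epsilon (inhabits nil) (fun W : list nat =>
        INR (length W) <= 2 * (Bv F G P Q g0 n i / s) + 3 /\ forall l, Se i l -> In l W)).
  assert (HLam : forall i, (i < Kn)%nat -> INR (length (Lam i)) <= 2 * (Bv F G P Q g0 n i / s) + 3 /\
                         forall l, Se i l -> In l (Lam i)).
  { intros i Hi. unfold Lam. apply epsilon_spec. apply window.
    unfold Rdiv; apply Rmult_le_pos. apply Bv_nonneg; auto. left; apply Rinv_0_lt_compat; auto.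
    intros l l' [_ [x [Hx Ex]]] [_ [x' [Hx' Ex']]]. rewrite Hdiff, <- Ex, <- Ex'.
    pose proof (osc F G P Q g0 n i x x' Hc Hi Hx Hx').
    unfold Rdiv; apply Rmult_le_compat_r; [left; apply Rinv_0_lt_compat; auto|].
    unfold Rabs in H; destruct Rcase_abs in H; lra. }
  set (Ig := fun l => epsilon (inhabits nil) (fun I : list nat => NoDup I /\ length I = m /\
        forall i, In i I -> (i < K n)%nat /\ exists x, incell P Q n i x /\ hh F G x = yl l)).
  assert (HIg : forall l, In l Gl -> NoDup (Ig l) /\ length (Ig l) = m /\
        forall i, In i (Ig l) -> (i < K n)%nat /\ exists x, incell P Q n i x /\ hh F G x = yl l).
  { intros l Hl. unfold Ig. apply epsilon_spec. apply filter_In in Hl. destruct Hl as [_ Hg'].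
    unfold gb in Hg'. destruct excluded_middle_informative; [exact e0|discriminate]. }
  set (Pairs := flat_map (fun l => map (fun i => (l, i)) (Ig l)) Gl).
  assert (HGl : INR m * INR (length Gl) <= 2 * V / s + 3 * INR Kn).
  { rewrite <- mult_INR.
    replace (m * length Gl)%nat with (length Pairs).
    2:{ unfold Pairs. apply len_flat_const. intros l Hl. rewrite length_map. apply HIg; auto. }
    apply Rle_trans with (INR (length (flat_map (fun i => map (fun l => (l, i)) (Lam i)) (seq 0 Kn)))).
    - apply le_INR. apply NoDup_incl_length.
      + unfold Pairs. apply NoDup_flat. apply NoDup_filter, seq_NoDup.
        * intros l Hl. apply NoDup_map_NoDup_ForallPairs. intros i j _ _ E. inversion E; auto. apply HIg; auto.
        * intros x y z Hx Hy Hne Hz Hz'. apply in_map_iff in Hz. apply in_map_iff in Hz'.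
          destruct Hz as [i [<- _]]. destruct Hz' as [j [E _]]. inversion E. auto.
      + intros [l i] Hp. unfold Pairs in Hp. apply in_flat_map in Hp. destruct Hp as [l' [Hl' Hp]].
        apply in_map_iff in Hp. destruct Hp as [i' [E Hi']]. inversion E; subst l' i'.
        destruct (HIg l Hl') as [_ [_ Hii]]. destruct (Hii i Hi') as [Hik Hex].
        apply incl_flat_seq. exists i. split; auto. apply in_map_iff. exists l. split; auto.
        apply (proj2 (HLam i Hik)). split; auto. apply filter_In in Hl'. destruct Hl' as [Hl' _]. apply in_seq in Hl'. lia.
    - rewrite len_flat_seq.
      apply Rle_trans with (rs (fun i => 2 / s * Bv F G P Q g0 n i + 3) Kn).
      + apply rs_le. intros i Hi. rewrite length_map. pose proof (proj1 (HLam i Hi)). unfold Rdiv in *. lra.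
      + rewrite rs_plus, rs_scal, rs_const. unfold Kn. rewrite Bv_sum by auto. fold V. right. unfold Rdiv. ring. }
  assert (HLdef : INR L = 12 * INR m * INR Kn + 3 * INR Kn + 1).
  { unfold L. rewrite !plus_INR, !mult_INR. simpl. lra. }
  assert (Hs' : 2 * V / s = 2 * (V / Dd) * INR L).
  { unfold s. field. split; lra. }
  rewrite Hs' in HGl. set (v := V / Dd) in *.
  assert (Hv : 0 <= v) by (unfold v, Rdiv; apply Rmult_le_pos; auto; left; apply Rinv_0_lt_compat; auto).
  assert (Hm' : INR m > 4 * v + 2) by (unfold v; unfold Rdiv in Hm |- *; lra).
  set (Gn := INR (length Gl)) in *. set (Bn := INR (length Bl)) in *.
  assert (HGn : INR L / 2 - 12 * INR Kn <= Gn) by lra.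
  assert (INR m * (INR L / 2 - 12 * INR Kn) <= INR m * Gn) by (apply Rmult_le_compat_l; auto; apply pos_INR).
  assert (INR m * (INR L / 2) >= (2 * v + 1) * INR L) by nra.
  nra.
Qed.

Lemma sw_DC D c0 d0 : DC (switches_ge D c0 d0).
Proof.
  intros k [l [Hl [Hn Hf]]]. destruct l as [|x l]. discriminate.
  exists l. split. simpl in Hl; lia. split. inversion Hn; auto. inversion Hf; auto.
Qed.

Lemma sw_0 D c0 d0 : switches_ge D c0 d0 0.
Proof. exists nil. split; auto. split; constructor. Qed.

Lemma chi_le D c0 d0 k : enat_le (Fin k) (chi D c0 d0) <-> switches_ge D c0 d0 k.
Proof. unfold chi. apply le_eog. apply sw_DC. apply sw_0. Qed.

Definition Pcr f g k := exists a b, 0 < a /\ 0 < b /\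
    enat_le (Fin k) (chi (scaled_diff f g a b) 0 (Rmin 1 (/ a))).

Lemma Pcr_DC f g : DC (Pcr f g).
Proof.
  intros k [a [b [Ha [Hb H]]]]. exists a, b. split; auto. split; auto.
  apply chi_le in H. apply chi_le. apply sw_DC; auto.
Qed.

Lemma Pcr_0 f g : Pcr f g 0.
Proof. exists 1, 1. split; [lra|]. split; [lra|]. apply chi_le, sw_0. Qed.

Lemma cr_le f g k : enat_le (Fin k) (crossing_number f g) <-> Pcr f g k.
Proof. unfold crossing_number. apply le_eog. apply Pcr_DC. apply Pcr_0. Qed.

Lemma sw_disj D c0 d0 c d c' d' : sign_switch D c0 d0 c d -> sign_switch D c0 d0 c' d' ->
  (c, d) <> (c', d') -> d < c' \/ d' < c.
Proof.
  intros (H1 & H2 & H3 & Z & dl & Hdl & Hdl2 & S) (H1' & H2' & H3' & Z' & dl' & Hdl' & Hdl2' & S') Hne.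
  destruct (Rlt_dec d c'); [left; auto|]. destruct (Rlt_dec d' c); [right; auto|]. exfalso.
  destruct (Rtotal_order c c') as [Lt|[Eq|Gt]].
  - set (x := Rmin dl' (c' - c)). assert (0 < x <= dl') by (unfold x; split; [apply Rmin_pos; lra|apply Rmin_l]).
    specialize (S' x H). rewrite (Z (c' - x)) in S'. lra.
    pose proof (Rmin_r dl' (c' - c)). fold x in H0. lra.
  - subst c'. destruct (Rtotal_order d d') as [Lt|[Eq|Gt]].
    + set (x := Rmin dl (d' - d)). assert (0 < x <= dl) by (unfold x; split; [apply Rmin_pos; lra|apply Rmin_l]).
      specialize (S x H). rewrite (Z' (d + x)) in S. lra.
      pose proof (Rmin_r dl (d' - d)). fold x in H0. lra.
    + subst; auto.
    + set (x := Rmin dl' (d - d')). assert (0 < x <= dl') by (unfold x; split; [apply Rmin_pos; lra|apply Rmin_l]).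
      specialize (S' x H). rewrite (Z (d' + x)) in S'. lra.
      pose proof (Rmin_r dl' (d - d')). fold x in H0. lra.
  - set (x := Rmin dl (c - c')). assert (0 < x <= dl) by (unfold x; split; [apply Rmin_pos; lra|apply Rmin_l]).
    specialize (S x H). rewrite (Z' (c - x)) in S. lra.
    pose proof (Rmin_r dl (c - c')). fold x in H0. lra.
Qed.

Lemma sign_keep A B A' B' : A * B < 0 -> Rabs (A' - A) < Rabs A -> Rabs (B' - B) < Rabs B -> A' * B' < 0.
Proof.
  intros H HA HB. apply (prod_neg_sign A B A' B' H).
  - unfold Rabs in *; repeat destruct Rcase_abs; nra.
  - unfold Rabs in *; repeat destruct Rcase_abs; nra.
Qed.

Lemma list_choice {X Y} (Rl : X -> Y -> Prop) (l : list X) :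
  (forall x, In x l -> exists y, Rl x y) -> exists l', Forall2 Rl l l'.
Proof.
  induction l as [|x l IH]; intros H. exists nil; constructor.
  destruct (H x (or_introl eq_refl)) as [y Hy]. destruct IH as [l' Hl'].
  intros; apply H; right; auto. exists (y :: l'). constructor; auto.
Qed.

Lemma Forall2_in_r {X Y} (Rl : X -> Y -> Prop) l l' z : Forall2 Rl l l' -> In z l' -> exists y, In y l /\ Rl y z.
Proof.
  induction 1; intros Hz. destruct Hz. destruct Hz as [<-|Hz]. exists x; split; auto; left; auto.
  destruct (IHForall2 Hz) as [y' [Hy Hr]]. exists y'; split; auto; right; auto.
Qed.

Lemma Forall2_NoDup {X Y} (Rl : X -> Y -> Prop) l l' : Forall2 Rl l l' -> NoDup l ->
  (forall x y z z', In x l -> In y l -> x <> y -> Rl x z -> Rl y z' -> z <> z') -> NoDup l'.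
Proof.
  induction 1 as [|x z l l' Hxz HF IH]; intros N D. constructor.
  apply NoDup_cons_iff in N. destruct N as [Nx Nl]. constructor.
  - intros Hz. destruct (Forall2_in_r Rl l l' z HF Hz) as [y [Hy Hyz]].
    assert (x <> y) by (intro E; subst; auto).
    apply (D x y z z (or_introl eq_refl) (or_intror Hy) H Hxz Hyz); auto.
  - apply IH; auto. intros; eapply D; eauto; right; auto.
Qed.

Lemma inD_cont f : in_D f -> cont_on f 0 1.
Proof. intros H. exact (proj1 H). Qed.

Lemma inD_dec f x y : in_D f -> 0 <= x -> x <= y -> y <= 1 -> f y <= f x.
Proof.
  intros (_ & H & _) H1 H2 H3. destruct (Req_dec x y). subst; lra. left; apply H; lra.
Qed.

Lemma inD_range f x : in_D f -> 0 <= x <= 1 -> 0 <= f x <= 1.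
Proof. intros (_ & _ & H & _) Hx. auto. Qed.

Lemma inD_pos f x : in_D f -> 0 <= x < 1 -> 0 < f x.
Proof. intros (_ & H & _ & _ & H1) Hx. rewrite <- H1. apply H; lra. Qed.

Lemma max_below {X} (phi : X -> R) l d0 : 0 < d0 -> (forall x, In x l -> phi x < d0) ->
  exists Q0, d0 / 2 <= Q0 < d0 /\ forall x, In x l -> phi x <= Q0.
Proof.
  intros Hd. induction l as [|x l IH]; intros H.
  - exists (d0 / 2). split. lra. intros x [].
  - destruct IH as [Q0 [HQ HQ']]. intros; apply H; right; auto.
    exists (Rmax Q0 (phi x)). split.
    + split. eapply Rle_trans; [|apply Rmax_l]; lra.
      apply Rmax_lub_lt; [lra|apply H; left; auto].
    + intros y [<-|Hy]. apply Rmax_r. eapply Rle_trans; [apply HQ'; auto|apply Rmax_l].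
Qed.

Lemma mk_switch Dl d0 p q z dl : 0 <= p -> q <= d0 -> p < z < q -> Dl z = 0 -> 0 < dl ->
  dl <= z - p -> dl <= q - z -> (forall x, 0 < x <= dl -> Dl (z - x) * Dl (z + x) < 0) ->
  sign_switch Dl 0 d0 z z.
Proof.
  intros. split. lra. split. lra. split. lra. split.
  intros x Hx. replace x with z by lra. auto.
  exists dl. split; auto. split; auto. apply Rmin_glb; lra.
Qed.

Lemma ML f g fs gs k : in_D f -> in_D g -> (forall n, in_D (fs n)) -> (forall n, in_D (gs n)) ->
  unif_conv fs f -> unif_conv gs g -> Pcr f g k -> exists n, Pcr (fs n) (gs n) k.
Proof.
  intros Hf Hg Hfs Hgs Uf Ug [a [b [Ha [Hb Hk]]]].
  apply chi_le in Hk. destruct Hk as [sw [Hlen [Hnd Hall]]].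
  rewrite Forall_forall in Hall.
  set (d0 := Rmin 1 (/ a)). set (Dl := scaled_diff f g a b).
  assert (Hd0 : 0 < d0) by (apply Rmin_pos; [lra|apply Rinv_0_lt_compat; auto]).
  assert (Hd01 : d0 <= 1) by apply Rmin_l.
  assert (Had0 : a * d0 <= 1).
  { pose proof (Rmin_r 1 (/ a)). fold d0 in H. apply Rle_trans with (a * / a). apply Rmult_le_compat_l; lra.
    rewrite Rinv_r; lra. }
  destruct (common_pos sw (fun x r => 0 < fst x - r /\ snd x + r < d0 /\
      Dl (fst x - r) * Dl (snd x + r) < 0 /\
      forall y, In y sw -> y <> x -> (snd x + r < fst y - r \/ snd y + r < fst x - r))) as [rho [Hrho Hr]].
  { intros [c d] Hx. destruct (Hall _ Hx) as (H1 & H2 & H3 & Z & dl & Hdl & Hdl2 & S).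
    assert (dl <= c - 0) by (eapply Rle_trans; [exact Hdl2|apply Rmin_l]).
    assert (dl <= d0 - d) by (eapply Rle_trans; [exact Hdl2|apply Rmin_r]).
    destruct (common_pos sw (fun y r => y <> (c, d) -> (d + r < fst y - r \/ snd y + r < c - r))) as [r2 [Hr2 R2]].
    { intros [c' d'] Hy. destruct (classic ((c', d') = (c, d))) as [E|E].
      - exists 1. split. lra. intros; contradiction.
      - destruct (sw_disj Dl 0 d0 c d c' d' (Hall _ Hx) (Hall _ Hy)) as [G1|G1]. intro E'; apply E; auto.
        + exists ((c' - d) / 3). split. lra. intros r' Hr' _. simpl. left. lra.
        + exists ((c - d') / 3). split. lra. intros r' Hr' _. simpl. right. lra. }
    exists (Rmin (dl / 2) r2). split. apply Rmin_pos; lra.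
    intros r' Hr'. pose proof (Rmin_l (dl/2) r2). pose proof (Rmin_r (dl/2) r2). simpl.
    split. lra. split. lra. split. apply S. lra.
    intros y Hy Hne. apply (R2 y Hy r'); auto. lra. }
  assert (Hr' : forall x, In x sw -> 0 < fst x - rho /\ snd x + rho < d0 /\
      Dl (fst x - rho) * Dl (snd x + rho) < 0 /\
      forall y, In y sw -> y <> x -> (snd x + rho < fst y - rho \/ snd y + rho < fst x - rho)).
  { intros x Hx. apply (Hr x Hx rho). lra. }
  set (p := fun x : R * R => fst x - rho). set (q := fun x : R * R => snd x + rho).
  destruct (common_pos sw (fun x e => forall phi : R -> R, Rabs (phi (p x) - Dl (p x)) < e ->
        Rabs (phi (q x) - Dl (q x)) < e -> phi (p x) * phi (q x) < 0)) as [mu [Hmu Hm]].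
  { intros x Hx. destruct (Hr' x Hx) as (_ & _ & Hs & _).
    assert (Dl (p x) <> 0) by (intro E; unfold p in E; rewrite E in Hs; lra).
    assert (Dl (q x) <> 0) by (intro E; unfold q in E; rewrite E in Hs; lra).
    exists (Rmin (Rabs (Dl (p x))) (Rabs (Dl (q x)))). split. apply Rmin_pos; apply Rabs_pos_lt; auto.
    intros r' Hr'' phi H1 H2. apply (sign_keep (Dl (p x)) (Dl (q x))). exact Hs.
    pose proof (Rmin_l (Rabs (Dl (p x))) (Rabs (Dl (q x)))). lra.
    pose proof (Rmin_r (Rabs (Dl (p x))) (Rabs (Dl (q x)))). lra. }
  destruct (Uf (mu / 3)) as [N1 HN1]. lra.
  destruct (Ug (mu / (3 * b))) as [N2 HN2]. apply Rdiv_lt_0_compat; lra.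
  set (n := Nat.max N1 N2). exists n.
  set (eta := Rmin (b / 2) (mu / 3)).
  assert (Heta : 0 < eta) by (apply Rmin_pos; lra).
  destruct (max_below q sw d0 Hd0) as [Q0 [HQ0 HQ0']].
  { intros x Hx. apply (Hr' x Hx). }
  assert (HgQ : 0 < gs n Q0) by (apply inD_pos; auto; lra).
  assert (Hcore : core_hyp (fun x => fs n (a * x)) (gs n) 0 Q0 (gs n Q0)).
  { split. lra. split. auto. split.
    { intros x y H1 H2 H3. apply inD_dec; auto; nra. } split.
    { intros x y H1 H2 H3. apply inD_dec; auto; nra. } split.
    { intros x Hx. apply inD_range; auto; nra. } split.
    { intros x Hx. apply inD_dec; auto; lra. } split.
    { apply cont_on_scale; [exact Ha|nra|apply inD_cont; auto]. }
    { apply (cont_on_sub _ 0 1); [apply inD_cont; auto|lra|lra]. } }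
  destruct (core _ _ _ _ _ (b - eta) (b + eta) Hcore ltac:(lra)) as [b' [Hb' [zl Hzl]]].
  assert (Hb'0 : 0 < b') by (pose proof (Rmin_l (b/2) (mu/3)); fold eta in H; lra).
  set (Dl' := scaled_diff (fs n) (gs n) a b').
  assert (Hclose : forall t, 0 <= t <= d0 -> Rabs (Dl' t - Dl t) < mu).
  { intros t Ht. unfold Dl', Dl, scaled_diff.
    assert (0 <= a * t <= 1) by nra.
    specialize (HN1 n ltac:(unfold n; lia) (a * t) H).
    specialize (HN2 n ltac:(unfold n; lia) t ltac:(lra)).
    pose proof (inD_range (gs n) t (Hgs n) ltac:(lra)).
    replace (fs n (a * t) - b' * gs n t - (f (a * t) - b * g t)) with
      ((fs n (a * t) - f (a * t)) + (- b) * (gs n t - g t) + (b - b') * gs n t) by ring.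
    eapply Rle_lt_trans. apply Rabs_triang. eapply Rle_lt_trans. apply Rplus_le_compat_r. apply Rabs_triang.
    rewrite !Rabs_mult, Rabs_Ropp, (Rabs_pos_eq b) by lra. rewrite (Rabs_pos_eq (gs n t)) by lra.
    assert (b * Rabs (gs n t - g t) < mu / 3).
    { apply Rmult_lt_reg_l with (/ b). apply Rinv_0_lt_compat; lra.
      replace (/ b * (b * Rabs (gs n t - g t))) with (Rabs (gs n t - g t)) by (field; lra).
      replace (/ b * (mu / 3)) with (mu / (3 * b)) by (field; lra). auto. }
    assert (Rabs (b - b') * gs n t <= mu / 3).
    { pose proof (Rmin_r (b/2) (mu/3)) as Hem. fold eta in Hem.
      assert (Rabs (b - b') <= mu / 3) by (unfold Rabs; destruct Rcase_abs; lra).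
      pose proof (Rabs_pos (b - b')). nra. }
    lra. }
  assert (HR : forall x, In x sw -> exists z, (p x < z < q x) /\ sign_switch Dl' 0 d0 z z).
  { intros x Hx. destruct (Hr' x Hx) as (H1 & H2 & H3 & _).
    destruct (Hall _ Hx) as (_ & Hcd & _).
    assert (Hpq : p x < q x) by (unfold p, q; lra).
    assert (Hsg : Dl' (p x) * Dl' (q x) < 0).
    { apply (Hm x Hx mu). lra. apply Hclose; unfold p; lra. apply Hclose; unfold q; lra. }
    assert (HqQ : q x <= Q0) by (apply HQ0'; auto).
    destruct (clean_cross (length zl) zl Dl' (p x) (q x) (le_n _) Hpq) as [z [Hz [Ez [dl [Hdl [Hd1 [Hd2 HS]]]]]]]; auto.
    - unfold Dl', scaled_diff. apply cont_on_minus.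
      + apply (cont_on_sub _ 0 Q0); [|unfold p; lra|lra]. apply cont_on_scale; [exact Ha|nra|apply inD_cont; auto].
      + apply cont_on_lin. apply (cont_on_sub _ 0 1); [apply inD_cont; auto|unfold p; lra|lra].
    - intros t Ht Et. apply Hzl. unfold p in Ht; lra. exact Et.
    - exists z. split; auto. apply (mk_switch Dl' d0 (p x) (q x) z dl); auto; unfold p, q in *; lra. }
  destruct (list_choice _ sw HR) as [zs Hzs].
  exists a, b'. split; auto. split; auto. apply chi_le. exists (map (fun z => (z, z)) zs). split; [|split].
  - rewrite length_map. rewrite <- (Forall2_length Hzs). auto.
  - apply NoDup_map_NoDup_ForallPairs. intros u v _ _ E. inversion E; auto.
    apply (Forall2_NoDup _ sw zs Hzs Hnd). intros x y z z' Hx Hy Hne [Hz _] [Hz' _] E. subst z'.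
    destruct (Hr' x Hx) as (_ & _ & _ & D1). destruct (D1 y Hy (not_eq_sym Hne)); unfold p, q in *; lra.
  - apply Forall_forall. intros [u v] Huv. apply in_map_iff in Huv. destruct Huv as [z [E Hz]].
    injection E as E1 E2; subst u v. destruct (Forall2_in_r _ sw zs z Hzs Hz) as [x [Hx [_ HS]]]. exact HS.
Qed.

Lemma partA f g fs gs : in_D f -> in_D g -> (forall n, in_D (fs n)) -> (forall n, in_D (gs n)) ->
  unif_conv fs f -> unif_conv gs g ->
  enat_le (crossing_number f g) (enat_sup_seq (fun n => crossing_number (fs n) (gs n))).
Proof.
  intros Hf Hg Hfs Hgs Uf Ug.
  change (enat_le (enat_of_ge (Pcr f g))
    (enat_of_ge (fun k => exists n, enat_le (Fin k) (crossing_number (fs n) (gs n))))).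
  apply eog_mono.
  - apply Pcr_DC.
  - intros k [n Hn]. exists n. destruct (crossing_number (fs n) (gs n)); simpl in *; auto; lia.
  - apply Pcr_0.
  - exists 0%nat. destruct (crossing_number (fs 0%nat) (gs 0%nat)); simpl; auto; lia.
  - intros k Hk. destruct (ML f g fs gs k Hf Hg Hfs Hgs Uf Ug Hk) as [n Hn]. exists n. apply cr_le; auto.
Qed.

Lemma Pcr2 f g x0 : in_D f -> in_D g -> 0 < x0 < 1 -> g x0 < f x0 -> Pcr f g 2.
Proof.
  intros Hf Hg Hx0 Hfg.
  destruct (inD_cont f Hf x0 ltac:(lra) (f x0 - g x0) ltac:(lra)) as [dl [Hdl Hc]].
  set (a := 1 + Rmin (dl / 2) ((1 - x0) / 2)).
  assert (Ha1 : 0 < Rmin (dl / 2) ((1 - x0) / 2)) by (apply Rmin_pos; lra).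
  pose proof (Rmin_l (dl / 2) ((1 - x0) / 2)). pose proof (Rmin_r (dl / 2) ((1 - x0) / 2)).
  assert (Ha : 1 < a) by (unfold a; lra).
  assert (Hax : a * x0 < 1) by (unfold a; nra).
  assert (Hfa : g x0 < f (a * x0)).
  { assert (Rabs (f (a * x0) - f x0) < f x0 - g x0).
    { apply Hc. nra. unfold a. replace ((1 + Rmin (dl / 2) ((1 - x0) / 2)) * x0 - x0) with
        (Rmin (dl / 2) ((1 - x0) / 2) * x0) by ring. rewrite Rabs_pos_eq by nra. nra. }
    unfold Rabs in H1; destruct Rcase_abs in H1; lra. }
  assert (Hia : / a < 1) by (rewrite <- Rinv_1; apply Rinv_lt_contravar; lra).
  assert (Hia0 : 0 < / a) by (apply Rinv_0_lt_compat; lra).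
  assert (Hx0a : x0 < / a).
  { apply Rmult_lt_reg_l with a. lra. rewrite Rinv_r by lra. auto. }
  assert (Hd0 : Rmin 1 (/ a) = / a) by (apply Rmin_right; lra).
  assert (Hgx0 : 0 < g x0) by (apply inD_pos; auto; lra).
  assert (Hga : 0 < g (/ a)) by (apply inD_pos; auto; lra).
  assert (Haa : a * / a = 1) by (apply Rinv_r; lra).
  assert (Hcore : core_hyp (fun x => f (a * x)) g 0 (/ a) (g (/ a))).
  { split. lra. split. auto. split.
    { intros x y H1 H2 H3. apply inD_dec; auto; nra. } split.
    { intros x y H1 H2 H3. apply inD_dec; auto; lra. } split.
    { intros x Hx. apply inD_range; auto; nra. } split.
    { intros x Hx. apply inD_dec; auto; lra. } split.
    { apply cont_on_scale; [lra|lra|apply inD_cont; auto]. }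
    { apply (cont_on_sub _ 0 1); [apply inD_cont; auto|lra|lra]. } }
  assert (Hbeta : 1 < f (a * x0) / g x0).
  { apply Rmult_lt_reg_r with (g x0); auto. unfold Rdiv. rewrite Rmult_assoc, Rinv_l; lra. }
  destruct (core _ _ _ _ _ 1 (f (a * x0) / g x0) Hcore Hbeta) as [b [Hb [zl Hzl]]].
  set (Dl := scaled_diff f g a b).
  assert (HD0 : Dl 0 < 0).
  { unfold Dl, scaled_diff. rewrite Rmult_0_r. destruct Hf as (_ & _ & _ & F0 & _).
    destruct Hg as (_ & _ & _ & G0 & _). rewrite F0, G0. lra. }
  assert (HDx : Dl x0 > 0).
  { unfold Dl, scaled_diff. assert (b * g x0 < f (a * x0)).
    { destruct Hb as [_ Hb]. apply Rmult_lt_compat_r with (r := g x0) in Hb; auto.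
      unfold Rdiv in Hb. rewrite Rmult_assoc, Rinv_l in Hb; lra. } lra. }
  assert (HDa : Dl (/ a) < 0).
  { unfold Dl, scaled_diff. rewrite Haa. destruct Hf as (_ & _ & _ & _ & F1). rewrite F1.
    assert (0 < b * g (/ a)) by (apply Rmult_lt_0_compat; lra). lra. }
  assert (Hcont : cont_on Dl 0 (/ a)).
  { unfold Dl, scaled_diff. apply cont_on_minus.
    apply cont_on_scale; [lra|lra|apply inD_cont; auto].
    apply cont_on_lin. apply (cont_on_sub _ 0 1); [apply inD_cont; auto|lra|lra]. }
  destruct (clean_cross (length zl) zl Dl 0 x0 (le_n _) ltac:(lra)) as [z1 [Hz1 [E1 [d1 [Hd1 [H11 [H12 HS1]]]]]]].
  { apply (cont_on_sub _ 0 (/ a)); auto; lra. } { nra. }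
  { intros t Ht Et. apply Hzl. lra. exact Et. }
  destruct (clean_cross (length zl) zl Dl x0 (/ a) (le_n _) ltac:(lra)) as [z2 [Hz2 [E2 [d2 [Hd2 [H21 [H22 HS2]]]]]]].
  { apply (cont_on_sub _ 0 (/ a)); auto; lra. } { nra. }
  { intros t Ht Et. apply Hzl. lra. exact Et. }
  exists a, b. split. lra. split. lra. apply chi_le.
  exists ((z1, z1) :: (z2, z2) :: nil). split. reflexivity. split.
  - constructor. intros [E|[]]. injection E; intros; lra. constructor. intros []. constructor.
  - rewrite Hd0. constructor. apply (mk_switch Dl (/ a) 0 x0 z1 d1); auto; lra.
    constructor. apply (mk_switch Dl (/ a) x0 (/ a) z2 d2); auto; lra. constructor.
Qed.

Theorem proposition3p5 (f g : R -> R) (fs gs : nat -> R -> R) :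
  in_D f -> in_D g -> (forall n, in_D (fs n)) -> (forall n, in_D (gs n)) ->
  unif_conv fs f -> unif_conv gs g ->
  enat_le (crossing_number f g)
          (enat_sup_seq (fun n => crossing_number (fs n) (gs n))) /\
  ((forall n, dominated (gs n) (fs n)) ->
     (forall x, 0 <= x <= 1 -> f x = g x) \/ dominated g f).
Proof.
  intros Hf Hg Hfs Hgs Uf Ug.
  pose proof (partA f g fs gs Hf Hg Hfs Hgs Uf Ug) as PA. split; auto.
  intros Hdom.
  assert (Hle : forall x, 0 <= x <= 1 -> g x <= f x).
  { intros x Hx. apply Rnot_lt_le. intros C.
    destruct (Uf ((g x - f x) / 2) ltac:(lra)) as [N1 H1].
    destruct (Ug ((g x - f x) / 2) ltac:(lra)) as [N2 H2].
    specialize (H1 (Nat.max N1 N2) ltac:(lia) x Hx). specialize (H2 (Nat.max N1 N2) ltac:(lia) x Hx).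
    destruct (Hdom (Nat.max N1 N2)) as [_ Hd]. specialize (Hd x Hx).
    unfold Rabs in H1, H2; destruct Rcase_abs in H1; destruct Rcase_abs in H2; lra. }
  destruct (classic (forall x, 0 <= x <= 1 -> f x = g x)) as [Eq|Neq]; [left; auto|right].
  apply not_all_ex_not in Neq. destruct Neq as [x0 Hx0]. apply imply_to_and in Hx0. destruct Hx0 as [Hx0 Ne].
  assert (Hlt : g x0 < f x0) by (specialize (Hle x0 Hx0); lra).
  assert (Hx01 : 0 < x0 < 1).
  { destruct Hf as (_ & _ & _ & F0 & F1). destruct Hg as (_ & _ & _ & G0 & G1).
    split; [destruct (Req_dec x0 0); [subst; lra|lra]|destruct (Req_dec x0 1); [subst; lra|lra]]. }
  split; auto.
  assert (Hsup : enat_sup_seq (fun n => crossing_number (fs n) (gs n)) = Fin 2).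
  { unfold enat_sup_seq.
    assert (HQ : forall k, (exists n, enat_le (Fin k) (crossing_number (fs n) (gs n))) <-> (k <= 2)%nat).
    { intros k. split.
      - intros [n Hn]. destruct (Hdom n) as [E _]. rewrite E in Hn. exact Hn.
      - intros Hk. exists 0%nat. destruct (Hdom 0%nat) as [E _]. rewrite E. exact Hk. }
    destruct (eog_spec (fun k => exists n, enat_le (Fin k) (crossing_number (fs n) (gs n)))) as [[Ha _]|[j [E [Pj Nj]]]].
    - intros k Hk. apply HQ in Hk. apply HQ. lia.
    - apply HQ. lia.
    - exfalso. specialize (Ha 3%nat). apply HQ in Ha. lia.
    - rewrite E. apply HQ in Pj. rewrite HQ in Nj. f_equal. lia. }
  rewrite Hsup in PA.
  assert (H2 : enat_le (Fin 2) (crossing_number f g)) by (apply cr_le; eapply Pcr2; eauto).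
  destruct (crossing_number f g); simpl in *; [f_equal; lia|contradiction].
Qed.
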